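(* Let $\mathcal X,\mathcal Y$ be complex Hilbert spaces and $A:\mathcal X\supset\operatorname{dom}A\to\mathcal Y$ a closed, densely defined linear operator with $\|Ax\|_{\mathcal Y}\ge c\|x\|_{\mathcal X}$ for some $c>0$ and all $x\in\operatorname{dom}A$. Let $\mathcal X_h$ be $\operatorname{dom}A$ with inner product $\langle x,y\rangle_{\mathcal X_h}=\langle Ax,Ay\rangle_{\mathcal Y}$ and $\mathcal Z_h=\mathcal X_h\times\mathcal X$ with the product inner product. Let $B:\mathcal Y\supset\operatorname{dom}B\to\mathcal X$ be closed, densely defined, with $A^*\subset-B$, and define $\mathcal A$ on $\mathcal Z_h$ by $\operatorname{dom}\mathcal A=\{(z_1,z_2)\in\mathcal X_h\times\mathcal X_h: Az_1\in\operatorname{dom}B\}$, $\mathcal A(z_1,z_2)=(z_2,BAz_1)$. Let $\mathcal G_1,\mathcal G_2$ be Hilbert spaces and let $\Lambda=(\Lambda_1,\Lambda_2):\operatorname{dom}A\to\mathcal G_1\times\mathcal G_2^*$ and $\Pi=(\Pi_1,\Pi_2):\operatorname{dom}B\to\mathcal G_1^*\times\mathcal G_2$ be linear maps forming a boundary triplet for the dual pair $(A^*,-B^* )$, i.e. $\Lambda$ and $\Pi$ are surjective and $-\langle By,x\rangle_{\mathcal X}-\langle y,Ax\rangle_{\mathcal Y}=\langle\Pi_1y,\Lambda_1x\rangle_{\mathcal G_1^*,\mathcal G_1}-\langle\Pi_2y,\Lambda_2x\rangle_{\mathcal G_2,\mathcal G_2^*}$ for all $y\in\operatorname{dom}B$,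 $x\in\operatorname{dom}A$. Let $\mathcal G:=\mathcal G_1\times\mathcal G_2$, $\mathcal G^*=\mathcal G_1^*\times\mathcal G_2^*$, and define on $\operatorname{dom}\mathcal A$ $\Gamma_0(z_1,z_2)=(\Lambda_1z_2,\ \Pi_2Az_1)\in\mathcal G$, $\Gamma_1(z_1,z_2)=(-\Pi_1Az_1,\ \Lambda_2z_2)\in\mathcal G^*$. Then $(\mathcal G,\Gamma_0,\Gamma_1)$ is a boundary triplet for $\mathcal A$: the map $(\Gamma_0,\Gamma_1):\operatorname{dom}\mathcal A\to\mathcal G\times\mathcal G^*$ is surjective and $\langle\mathcal Af,g\rangle_{\mathcal Z_h}+\langle f,\mathcal Ag\rangle_{\mathcal Z_h}=\langle\Gamma_1f,\Gamma_0g\rangle_{\mathcal G^*,\mathcal G}+\langle\Gamma_0f,\Gamma_1g\rangle_{\mathcal G,\mathcal G^*}$ for all $f,g\in\operatorname{dom}\mathcal A$.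
   Context: All Hilbert spaces are complex. For a Hilbert space $\mathcal H$, $\mathcal H^*$ denotes its anti-dual (bounded conjugate-linear functionals), $\langle\cdot,\cdot\rangle_{\mathcal H^*,\mathcal H}$ the duality pairing and $\langle h,\phi\rangle_{\mathcal H,\mathcal H^*}:=\overline{\langle\phi,h\rangle_{\mathcal H^*,\mathcal H}}$. The dual-pair relation $A^*\subset-B$ is equivalent to $B^*\subset -A$. It is known that $\mathcal A$ is closed, densely defined and $\mathcal A^*\subset-\mathcal A$, so that $\mathcal A$ is the adjoint of the closed densely defined skew-symmetric operator $\mathcal A^*$. *)

(* Defs.v *)
From HB Require Import structures.
From mathcomp Require Import all_boot all_order all_algebra.
From mathcomp Require Import reals complex.
Set Implicit Arguments. Unset Strict Implicit. Unset Printing Implicit Defensive.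
Import Order.TTheory GRing.Theory Num.Theory.
Local Open Scope ring_scope.
Local Open Scope complex_scope.

Section Hilbert.
Variable R : realType.
Local Notation C := R[i].

(* Norm induced by an inner product; it is a nonnegative real, viewed in C. *)
Definition hnorm (V : lmodType C) (ip : V -> V -> C) (x : V) : C := sqrtC (ip x x).

Definition hconv (V : lmodType C) (ip : V -> V -> C) (u : nat -> V) (l : V) : Prop :=
  forall e : C, 0 < e -> exists N : nat, forall n, (N <= n)%N -> hnorm ip (u n - l) < e.

Definition hcauchy (V : lmodType C) (ip : V -> V -> C) (u : nat -> V) : Prop :=
  forall e : C, 0 < e -> exists N : nat, forall m n, (N <= m)%N -> (N <= n)%N ->
    hnorm ip (u m - u n) < e.

Record is_hilbert (V : lmodType C) (ip : V -> V -> C) : Prop := {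
  hil_linl : forall (a : C) (x y z : V), ip (a *: x + y) z = a * ip x z + ip y z;
  hil_sym  : forall x y : V, ip y x = (ip x y)^*;
  hil_pos  : forall x : V, 0 <= ip x x;
  hil_def  : forall x : V, ip x x = 0 -> x = 0;
  hil_complete : forall u : nat -> V, hcauchy ip u -> exists l, hconv ip u l
}.

(* phi is an element of the anti-dual V^*: a bounded conjugate-linear functional. *)
Definition is_antidual (V : lmodType C) (ip : V -> V -> C) (phi : V -> C) : Prop :=
  (forall (a : C) (x y : V), phi (a *: x + y) = a^* * phi x + phi y) /\
  (exists M : C, 0 <= M /\ forall x, `|phi x| <= M * hnorm ip x).

(* Partial operators T : V ⊃ dom T -> W, given by a function and a domain. *)
Definition is_subspace (V : lmodType C) (D : V -> Prop) : Prop :=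
  D 0 /\ forall (a : C) x y, D x -> D y -> D (a *: x + y).

Definition linear_on (V W : lmodType C) (D : V -> Prop) (f : V -> W) : Prop :=
  forall (a : C) x y, D x -> D y -> f (a *: x + y) = a *: f x + f y.

Definition linear_on_fun (V : lmodType C) (G : Type) (D : V -> Prop) (f : V -> G -> C) :
  Prop := forall (a : C) x y, D x -> D y -> forall g, f (a *: x + y) g = a * f x g + f y g.

Definition densely_defined (V W : lmodType C) (ipV : V -> V -> C)
  (D : V -> Prop) (T : V -> W) : Prop :=
  is_subspace D /\ linear_on D T /\
  forall x (e : C), 0 < e -> exists x', D x' /\ hnorm ipV (x - x') < e.

Definition closed_op (V W : lmodType C) (ipV : V -> V -> C) (ipW : W -> W -> C)
  (D : V -> Prop) (T : V -> W) : Prop :=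
  forall (u : nat -> V) x y, (forall n, D (u n)) -> hconv ipV u x ->
    hconv ipW (fun n => T (u n)) y -> D x /\ T x = y.

(* A^* ⊂ -B, where A^* is the Hilbert-space adjoint of (A, domA):
   y ∈ dom A^* with A^* y = w  iff  <A x, y>_W = <x, w>_V for all x ∈ dom A. *)
Definition adjoint_sub_neg (V W : lmodType C) (ipV : V -> V -> C) (ipW : W -> W -> C)
  (domA : V -> Prop) (A : V -> W) (domB : W -> Prop) (B : W -> V) : Prop :=
  forall (y : W) (w : V), (forall x, domA x -> ipW (A x) y = ipV x w) ->
    domB y /\ B y = - w.

Definition dom_calA (X Y : lmodType C) (domA : X -> Prop) (A : X -> Y)
  (domB : Y -> Prop) (z : X * X) : Prop :=
  domA z.1 /\ domA z.2 /\ domB (A z.1).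

Definition calA (X Y : lmodType C) (A : X -> Y) (B : Y -> X) (z : X * X) : X * X :=
  (z.2, B (A z.1)).

Definition Zh_inner (X Y : lmodType C) (ipX : X -> X -> C) (ipY : Y -> Y -> C)
  (A : X -> Y) (f g : X * X) : C :=
  ipY (A f.1) (A g.1) + ipX f.2 g.2.

Definition Gamma0 (X Y G1 G2 : Type) (A : X -> Y) (Lam1 : X -> G1) (Pi2 : Y -> G2)
  (z : X * X) : G1 * G2 := (Lam1 z.2, Pi2 (A z.1)).

Definition Gamma1 (X Y G1 G2 : Type) (A : X -> Y) (Pi1 : Y -> G1 -> C)
  (Lam2 : X -> G2 -> C) (z : X * X) : (G1 -> C) * (G2 -> C) :=
  (fun g => - Pi1 (A z.1) g, Lam2 z.2).

Definition pair_dual (G1 G2 : Type) (phi : (G1 -> C) * (G2 -> C)) (g : G1 * G2) : C :=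
  phi.1 g.1 + phi.2 g.2.

Definition pair_primal (G1 G2 : Type) (g : G1 * G2) (phi : (G1 -> C) * (G2 -> C)) : C :=
  (pair_dual phi g)^*.

End Hilbert.

(* Main.v *)
Require Import Defs.
From HB Require Import structures.
From mathcomp Require Import all_boot all_order all_algebra.
From mathcomp Require Import reals complex.
From mathcomp Require Import ring lra.
From mathcomp Require Import boolp classical_sets.
Set Implicit Arguments. Unset Strict Implicit. Unset Printing Implicit Defensive.
Import Order.TTheory GRing.Theory Num.Theory.
Local Open Scope ring_scope.
Local Open Scope complex_scope.

Section Inner.
Variables (R : realType) (V : lmodType R[i]) (ip : V -> V -> R[i]).
Hypothesis h : is_hilbert ip.

Lemma ReD (a b : R[i]) : complex.Re (a + b) = complex.Re a + complex.Re b.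
Proof. by case: a; case: b. Qed.
Lemma ReN (a : R[i]) : complex.Re (- a) = - complex.Re a.
Proof. by case: a. Qed.
Lemma ReB (a b : R[i]) : complex.Re (a - b) = complex.Re a - complex.Re b.
Proof. by rewrite ReD ReN. Qed.
Lemma ReJ (a : R[i]) : complex.Re (a^*) = complex.Re a.
Proof. by case: a. Qed.
Lemma ReJ' (a : R[i]) : complex.Re (a^*%C) = complex.Re a.
Proof. by case: a. Qed.
Lemma ReRM (r : R) (a : R[i]) : complex.Re (r%:C * a) = r * complex.Re a.
Proof. case: a => x y /=. by rewrite !mul0r subr0. Qed.

Lemma ip0l z : ip 0 z = 0.
Proof.
have := hil_linl h 1 0 0 z; rewrite scaler0 addr0 mul1r => e.
by apply: (addrI (ip 0 z)); rewrite addr0 -e.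
Qed.
Lemma ipDl x y z : ip (x + y) z = ip x z + ip y z.
Proof. by have := hil_linl h 1 x y z; rewrite scale1r mul1r. Qed.
Lemma ipZl a x z : ip (a *: x) z = a * ip x z.
Proof. by have := hil_linl h a x 0 z; rewrite addr0 ip0l addr0. Qed.
Lemma ipNl x z : ip (- x) z = - ip x z.
Proof. by rewrite -scaleN1r ipZl mulN1r. Qed.
Lemma ipBl x y z : ip (x - y) z = ip x z - ip y z.
Proof. by rewrite ipDl ipNl. Qed.
Lemma ip0r z : ip z 0 = 0.
Proof. by rewrite (hil_sym h) ip0l conjc0. Qed.
Lemma ipDr x y z : ip z (x + y) = ip z x + ip z y.
Proof. by rewrite (hil_sym h) ipDl rmorphD /= -!(hil_sym h). Qed.
Lemma ipZr a x z : ip z (a *: x) = a^*%C * ip z x.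
Proof. by rewrite (hil_sym h) ipZl rmorphM /= -!(hil_sym h). Qed.

Definition Nr x := complex.Re (ip x x).
Lemma ip_real x : ip x x = (Nr x)%:C.
Proof.
have := hil_pos h x; rewrite lecE /Nr; case: (ip x x) => a b /= /andP[/eqP -> _].
by [].
Qed.
Lemma Nr_ge0 x : 0 <= Nr x.
Proof. by have := hil_pos h x; rewrite ip_real ler0c. Qed.
Lemma Nr_eq0 x : Nr x = 0 -> x = 0.
Proof. by move=> e; apply: (hil_def h); rewrite ip_real e. Qed.
Lemma Nr0 : Nr 0 = 0.
Proof. by rewrite /Nr ip0l. Qed.

Definition qr x y := complex.Re (ip x y).

Lemma Nexp v w (a : R) : Nr (v + a%:C *: w) = Nr v + 2 * a * qr v w + a ^+ 2 * Nr w.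
Proof.
have cR : (a%:C)^*%C = a%:C by rewrite /= oppr0.
rewrite /Nr /qr ipDl !ipDr !ipZl !ipZr cR !ReD !ReRM.
rewrite [ip w v](hil_sym h) ReJ. ring.
Qed.


Lemma Re0 : complex.Re (0 : R[i]) = 0. Proof. by []. Qed.

Lemma CS v u : qr v u ^+ 2 <= Nr v * Nr u.
Proof.
case: (eqVneq (Nr u) 0) => [u0|nz].
  by have -> := @Nr_eq0 u u0; rewrite /qr ip0r Re0 Nr0 mulr0 expr0n.
have up : 0 < Nr u by rewrite lt_def nz Nr_ge0.
have := Nr_ge0 (v + (- qr v u / Nr u)%:C *: u); rewrite Nexp.
have -> : Nr v + 2 * (- qr v u / Nr u) * qr v u + (- qr v u / Nr u) ^+ 2 * Nr u
   = Nr v - qr v u ^+ 2 / Nr u by field.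
by rewrite subr_ge0 ler_pdivrMr.
Qed.

Lemma hnormE x : hnorm ip x = sqrtC ((Nr x)%:C).
Proof. by rewrite /hnorm ip_real. Qed.

Lemma hnorm_lt x (r : R) : 0 < r -> (hnorm ip x < r%:C) = (Nr x < r ^+ 2).
Proof.
move=> rp; rewrite hnormE.
have -> : r%:C = sqrtC ((r ^+ 2)%:C) by rewrite rmorphXn sqrCK // ler0c ltW.
by rewrite ltr_sqrtC ?ltcR // nnegrE ler0c ?Nr_ge0 ?sqr_ge0.
Qed.

Lemma antidual_ip g0 : is_antidual ip (fun g => ip g0 g).
Proof.
split; first by move=> a x y; rewrite ipDr ipZr.
exists (sqrtC ((2 * Nr g0)%:C)); split; first by rewrite sqrtC_ge0 ler0c mulr_ge0 ?Nr_ge0.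
move=> g.
set w := ip g0 g.
have cJ : ((- 'i)^*%C) = 'i :> R[i] by rewrite /= oppr0 opprK.
have eI : ip g0 ((- 'i) *: g) = w * 'i by rewrite ipZr cJ mulrC.
have nI : Nr ((- 'i) *: g) = Nr g.
  rewrite /Nr ipZl ipZr cJ mulrA mulNr -expr2 sqr_i opprK mul1r //.
have h1 : complex.Re w ^+ 2 <= Nr g0 * Nr g by exact: CS.
have h2 : complex.Im w ^+ 2 <= Nr g0 * Nr g.
  have := CS g0 ((- 'i) *: g); rewrite /qr eI ReiNIm nI sqrrN //.
have hw : `|w| ^+ 2 <= (2 * Nr g0 * Nr g)%:C.
  by rewrite -add_Re2_Im2 lecR; lra.
rewrite hnormE -sqrtCM ?nnegrE ?ler0c ?mulr_ge0 ?Nr_ge0 // -rmorphM /=.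
rewrite -(sqrCK (normr_ge0 w)) ler_sqrtC // nnegrE ?exprn_ge0 ?normr_ge0 ?ler0c ?mulr_ge0 ?Nr_ge0 //.
Qed.

Lemma pos_real (e : R[i]) : 0 < e -> exists r : R, 0 < r /\ e = r%:C.
Proof. case: e => a b; rewrite ltcE /= => /andP[/eqP -> ha]; by exists a. Qed.

End Inner.

Lemma archi_inv (R : realType) (d : R) : 0 < d ->
  exists N : nat, forall n, (N <= n)%N -> n.+1%:R^-1 < d.
Proof.
move=> dp; exists (Num.bound d^-1) => n hn.
rewrite invf_plt ?posrE ?ltr0Sn //.
apply: (lt_le_trans (archi_boundP _)); first by rewrite invr_ge0 ltW.
by rewrite ler_nat; apply: leqW.
Qed.

Lemma inv_mono (R : realType) (N n : nat) : (N <= n)%N -> n.+1%:R^-1 <= N.+1%:R^-1 :> R.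
Proof. by move=> h; rewrite lef_pV2 ?posrE ?ltr0Sn // ler_nat. Qed.

Lemma fin_ineq (R : realType) (q qn qd Nd en de a : R) :
  qn ^+ 2 < en * a -> qd ^+ 2 <= Nd * a -> de * (4 * a) = q ^+ 2 ->
  en * a < de * a -> Nd * a < de * a -> q ^+ 2 <= 2 * qn ^+ 2 + 2 * qd ^+ 2 -> False.
Proof. move=> *; lra. Qed.

Section Proj.
Variables (R : realType) (X Y : lmodType R[i]) (ipX : X -> X -> R[i]) (ipY : Y -> Y -> R[i]).
Hypotheses (hX : is_hilbert ipX) (hY : is_hilbert ipY).
Variables (domA : X -> Prop) (A : X -> Y).
Hypotheses (hsub : is_subspace domA) (hlin : linear_on domA A)
  (hAclosed : closed_op ipX ipY domA A) (c : R[i]) (hc : 0 < c)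
  (hAbelow : forall x, domA x -> c * hnorm ipX x <= hnorm ipY (A x)).

Lemma A0 : A 0 = 0.
Proof.
have := hlin 1 hsub.1 hsub.1; rewrite scaler0 addr0 scale1r => e.
by apply: (addrI (A 0)); rewrite addr0 -e.
Qed.

Definition SA u := exists z, domA z /\ A z = u.

Lemma SA_lin a {u v} : SA u -> SA v -> SA (a *: u + v).
Proof.
move=> [x [dx <-]] [z [dz <-]]; exists (a *: x + z); split; first exact: hsub.2.
exact: hlin.
Qed.

Lemma SA0 : SA 0.
Proof. by exists 0; split; [exact: hsub.1 | exact: A0]. Qed.

Lemma SAZ a u : SA u -> SA (a *: u).
Proof. by move=> hu; have := SA_lin a hu SA0; rewrite addr0. Qed.

Lemma Adiff x z : domA x -> domA z -> A (x - z) = A x - A z.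
Proof.
move=> dx dz; have := hlin (-1) dz dx; rewrite !scaleN1r => e.
by rewrite addrC e addrC.
Qed.

Lemma domD x z : domA x -> domA z -> domA (x - z).
Proof. by move=> dx dz; have := hsub.2 (-1) _ _ dz dx; rewrite scaleN1r addrC. Qed.

Lemma proj (y : Y) : exists z, domA z /\ forall u, SA u -> qr ipY (y - A z) u = 0.
Proof.
pose E := fun r : R => exists u, SA u /\ r = Nr ipY (y - u).
have hinf : has_inf E.
  split; first by exists (Nr ipY (y - 0)); exists 0; split => //; exact: SA0.
  by exists 0 => r [u [_ ->]]; exact: (Nr_ge0 hY).
pose d := inf E.
have dle : forall u, SA u -> d <= Nr ipY (y - u).
  by move=> u hu; apply: (ge_inf hinf.2); exists u.
have sq : forall n : nat, exists z, domA z /\ Nr ipY (y - A z) < d + n.+1%:R^-1.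
  move=> n; have [e [u [[z [dz <-]] ->]] lt] := @inf_adherent R E (n.+1%:R^-1) ltac:(by rewrite invr_gt0 ltr0Sn) hinf.
  by exists z.
have [zs hzs] := choice sq.
pose u n := A (zs n).
have Su : forall n, SA (u n) by move=> n; exists (zs n); split => //; exact: (hzs n).1.
have bnd : forall n m, Nr ipY (u n - u m) <= 2 * n.+1%:R^-1 + 2 * m.+1%:R^-1.
  move=> n m.
  pose v := y - u n; pose x := u n - u m.
  have e1 : y - u m = v + 1%:C *: x by rewrite rmorph1 scale1r /v /x addrA subrK.
  have Sx : SA x by have := SA_lin (-1) (Su m) (Su n); rewrite scaleN1r addrC.
  pose mid := (- (2^-1))%:C *: x + u n.
  have Smid : SA mid by apply: SA_lin.
  have e2 : y - mid = v + (2^-1)%:C *: x.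
    by rewrite /mid rmorphN scaleNr opprD opprK addrCA addrC.
  have h1 := dle _ Smid; rewrite e2 (Nexp hY) divff ?pnatr_eq0 // mul1r expr2 in h1.
  have h2 := (hzs n).2; rewrite -/(u n) -/v in h2.
  have h3 := (hzs m).2; rewrite -/(u m) e1 (Nexp hY) mulr1 expr1n mul1r in h3.
  rewrite -/x.
  have n0 := Nr_ge0 hY x.
  have q4 : (2^-1 * 2^-1 : R) = 4^-1 by field.
  rewrite q4 in h1. set en := n.+1%:R^-1 in h2 *. set em := m.+1%:R^-1 in h3 *. clearbody en em v x d. lra.
have cauY : hcauchy ipY u.
  move=> e ep; have [r [rp ->]] := pos_real ep.
  have [N hN] := archi_inv (d := r ^+ 2 / 4) ltac:(by rewrite divr_gt0 ?exprn_gt0).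
  exists N => m n hm hn; rewrite (hnorm_lt hY) //.
  apply: (le_lt_trans (bnd m n)).
  have := hN _ hm; have := hN _ hn.
  set em := m.+1%:R^-1; set en := n.+1%:R^-1; clearbody em en => ??. lra.
have cauX : hcauchy ipX zs.
  move=> e ep; have [N hN] := cauY (c * e) (mulr_gt0 hc ep).
  exists N => m n hm hn.
  rewrite -(ltr_pM2l hc); apply: (le_lt_trans (hAbelow _)).
    by apply: domD; [exact: (hzs m).1 | exact: (hzs n).1 ].
  by rewrite Adiff; [exact: hN | exact: (hzs m).1 | exact: (hzs n).1 ].
have [t ht] := hil_complete hY cauY.
have [z hz] := hil_complete hX cauX.
have [dz Azt] := hAclosed (fun n => (hzs n).1) hz ht.
exists z; split => // w Sw.
case: (eqVneq (Nr ipY w) 0) => [w0|wnz].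
  by rewrite (Nr_eq0 hY w0) /qr (ip0r hY) Re0.
have ap : 0 < Nr ipY w by rewrite lt_def wnz (Nr_ge0 hY).
set a := Nr ipY w.
have hn : forall n, qr ipY (y - u n) w ^+ 2 < n.+1%:R^-1 * a.
  move=> n; set q := qr ipY (y - u n) w; pose mu := - q / a.
  have Sm : SA ((- mu)%:C *: w + u n) by apply: SA_lin.
  have := dle _ Sm.
  have -> : y - ((- mu)%:C *: w + u n) = (y - u n) + mu%:C *: w.
    by rewrite rmorphN scaleNr opprD opprK addrCA addrC.
  rewrite (Nexp hY) -/q -/a.
  have -> : Nr ipY (y - u n) + 2 * mu * q + mu ^+ 2 * a = Nr ipY (y - u n) - q ^+ 2 / a.
    by rewrite /mu; field; rewrite gt_eqF.
  have := (hzs n).2; rewrite -/(u n) => h2 h1.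
  rewrite -ltr_pdivrMr //.
  move: h1 h2; set en := n.+1%:R^-1; set N0 := Nr ipY (y - u n); set qq := q ^+ 2 / a.
  clearbody en N0 qq d => h1 h2; lra.
have conv : forall de : R, 0 < de -> exists N, forall n, (N <= n)%N -> Nr ipY (u n - t) < de.
  move=> de dep; have [N hN] := ht (Num.sqrt de)%:C ltac:(by rewrite ltcR sqrtr_gt0).
  exists N => n hn0; have := hN n hn0.
  by rewrite (hnorm_lt hY) ?sqrtr_gt0 // sqr_sqrtr // ltW.
have diff : forall n, qr ipY (y - A z) w - qr ipY (y - u n) w = qr ipY (u n - t) w.
  by move=> n; rewrite /qr -ReB !(ipBl hY) Azt; congr complex.Re; ring.
set q := qr ipY (y - A z) w.
have : q ^+ 2 <= 0.
  rewrite leNgt; apply/negP => Qp.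
  pose de := q ^+ 2 / (4 * a).
  have dep : 0 < de by rewrite divr_gt0 // mulr_gt0.
  have [N1 h1] := conv de dep.
  have [N2 h2] := archi_inv dep.
  pose n := maxn N1 N2.
  have k1 := h1 n (leq_maxl _ _).
  have k2 := h2 n (leq_maxr _ _).
  have k3 := hn n.
  have k4 := diff n; rewrite -/q in k4.
  have k5 := CS hY (u n - t) w; rewrite -/a in k5.
  have k6 : de * (4 * a) = q ^+ 2 by rewrite /de mulfVK // mulf_neq0 // gt_eqF.
  have k7 : n.+1%:R^-1 * a < de * a by rewrite ltr_pM2r.
  have k8 : Nr ipY (u n - t) * a < de * a by rewrite ltr_pM2r.
  move: k1 k2 k3 k4 k5 k6 k7 k8.
  set en := n.+1%:R^-1; set qn := qr ipY (y - u n) w; set qd := qr ipY (u n - t) w;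
  set Nd := Nr ipY (u n - t).
  clearbody en qn qd Nd de q a => k1 k2 k3 k4 k5 k6 k7 k8.
  have k9 : q = qn + qd by lra.
  have k10 : q ^+ 2 <= 2 * qn ^+ 2 + 2 * qd ^+ 2.
    by rewrite k9; have := sqr_ge0 (qn - qd); lra.
  exact: (fin_ineq k3 k5 k6 k7 k8 k10).
move=> Q; have : q == 0 by rewrite -sqrf_eq0 eq_le Q sqr_ge0.
by move/eqP.
Qed.

End Proj.

Unset Implicit Arguments.
Set Strict Implicit.

Theorem theorem3p3 (R : realType)
  (X Y G1 G2 : lmodType R[i])
  (ipX : X -> X -> R[i]) (ipY : Y -> Y -> R[i])
  (ipG1 : G1 -> G1 -> R[i]) (ipG2 : G2 -> G2 -> R[i])
  (hX : is_hilbert ipX) (hY : is_hilbert ipY)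
  (hG1 : is_hilbert ipG1) (hG2 : is_hilbert ipG2)
  (* A : X ⊃ dom A -> Y closed, densely defined, bounded below *)
  (domA : X -> Prop) (A : X -> Y)
  (hAdense : densely_defined ipX domA A) (hAclosed : closed_op ipX ipY domA A)
  (c : R[i]) (hc : 0 < c)
  (hAbelow : forall x, domA x -> c * hnorm ipX x <= hnorm ipY (A x))
  (* B : Y ⊃ dom B -> X closed, densely defined, A-adjoint ⊂ -B *)
  (domB : Y -> Prop) (B : Y -> X)
  (hBdense : densely_defined ipY domB B) (hBclosed : closed_op ipY ipX domB B)
  (hAB : adjoint_sub_neg ipX ipY domA A domB B)
  (* boundary triplet (Lambda, Pi) for the dual pair (A-adjoint, -B-adjoint) *)
  (Lam1 : X -> G1) (Lam2 : X -> G2 -> R[i])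
  (Pi1 : Y -> G1 -> R[i]) (Pi2 : Y -> G2)
  (hLam1 : linear_on domA Lam1) (hLam2 : linear_on_fun domA Lam2)
  (hLam2d : forall x, domA x -> is_antidual ipG2 (Lam2 x))
  (hPi1 : linear_on_fun domB Pi1) (hPi2 : linear_on domB Pi2)
  (hPi1d : forall y, domB y -> is_antidual ipG1 (Pi1 y))
  (hLamsurj : forall (g1 : G1) (phi2 : G2 -> R[i]), is_antidual ipG2 phi2 ->
     exists x, domA x /\ Lam1 x = g1 /\ Lam2 x = phi2)
  (hPisurj : forall (phi1 : G1 -> R[i]) (g2 : G2), is_antidual ipG1 phi1 ->
     exists y, domB y /\ Pi1 y = phi1 /\ Pi2 y = g2)
  (hgreen : forall y x, domB y -> domA x ->
     - ipX (B y) x - ipY y (A x) = Pi1 y (Lam1 x) - (Lam2 x (Pi2 y))^*) :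
  (* (G, Gamma0, Gamma1) is a boundary triplet for calA *)
  (forall (g : G1 * G2) (phi : (G1 -> R[i]) * (G2 -> R[i])),
     is_antidual ipG1 phi.1 -> is_antidual ipG2 phi.2 ->
     exists f : X * X, dom_calA domA A domB f /\
       Gamma0 A Lam1 Pi2 f = g /\ Gamma1 A Pi1 Lam2 f = phi) /\
  (forall f g : X * X, dom_calA domA A domB f -> dom_calA domA A domB g ->
     Zh_inner ipX ipY A (calA A B f) g + Zh_inner ipX ipY A f (calA A B g) =
     pair_dual (Gamma1 A Pi1 Lam2 f) (Gamma0 A Lam1 Pi2 g)
     + pair_primal (Gamma0 A Lam1 Pi2 f) (Gamma1 A Pi1 Lam2 g)).
Proof.
have hsub := hAdense.1.
have hlin := hAdense.2.1.
split.
  move=> [g1 g2] [phi1 phi2] /= h1 h2.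
  have [z2 [dz2 [L1 L2]]] := hLamsurj g1 phi2 h2.
  have h1' : is_antidual ipG1 (fun g => - phi1 g).
    case: h1 => lin [M [M0 hM]]; split; first by move=> a x y; rewrite lin; ring.
    by exists M; split => // x; rewrite normrN.
  have [y [dy [P1 P2]]] := hPisurj _ g2 h1'.
  have [z1 [dz1 orth]] := proj hX hY hsub hlin hAclosed hc hAbelow y.
  set k := y - A z1.
  have ortho : forall x, domA x -> ipY (A x) k = 0.
    move=> x dx; set w := ipY k (A x).
    have Sx : SA domA A (A x) by exists x.
    have hre : complex.Re w = 0 by exact: orth.
    have cJ : ((- 'i)^*%C) = 'i :> R[i] by rewrite /= oppr0 opprK.
    have him : complex.Im w = 0.
      have := orth _ (SAZ hsub hlin (- 'i) Sx).
      by rewrite /qr (ipZr hY) cJ mulrC ReiNIm => /eqP; rewrite oppr_eq0 => /eqP.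
    have w0 : w = 0 by rewrite (complexE w) hre him mulr0 addr0.
    by rewrite (hil_sym hY) -/w w0 conjc0.
  have [dk Bk] := hAB k 0 (fun x dx => etrans (ortho x dx) (esym (ip0r hX x))).
  have gr : forall x, domA x -> Pi1 k (Lam1 x) = (Lam2 x (Pi2 k))^*%C.
    move=> x dx; have := hgreen k x dk dx.
    rewrite Bk oppr0 (ip0l hX) (hil_sym hY (A x) k) ortho // conjc0.
    by move=> e; apply/eqP; rewrite -subr_eq0 -e; apply/eqP; ring.
  have zad : is_antidual ipG2 (fun _ : G2 => 0 : R[i]).
    split; first by move=> *; rewrite mulr0 addr0.
    by exists 0; split => // x; rewrite mul0r normr0.
  have P1k : forall g, Pi1 k g = 0.
    move=> g; have [x [dx [Lx1 Lx2]]] := hLamsurj g (fun _ => 0) zad.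
    by rewrite -Lx1 gr // Lx2 conjc0.
  have P2k : Pi2 k = 0.
    have [x [dx [Lx1 Lx2]]] := hLamsurj 0 (fun g => ipG2 (Pi2 k) g) (antidual_ip hG2 (Pi2 k)).
    have := gr x dx; rewrite Lx1 P1k Lx2 => e.
    apply: (hil_def hG2); rewrite -[ipG2 _ _]conjcK -e conjc0 //.
  have Az1 : A z1 = (-1) *: k + y by rewrite scaleN1r /k opprB subrK.
  have dAz1 : domB (A z1) by rewrite Az1; apply: hBdense.1.2.
  exists (z1, z2); split; first by split; [|split].
  split.
    by rewrite /Gamma0 /= L1 Az1 hPi2 // P2k scaler0 add0r P2.
  rewrite /Gamma1 /= L2; congr pair; apply: funext => g.
  by rewrite Az1 hPi1 // P1k P1 mulr0 add0r opprK.
move=> [z1 z2] [w1 w2] [dz1 [dz2 dBz]] [dw1 [dw2 dBw]].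
rewrite /Zh_inner /calA /pair_dual /pair_primal /Gamma0 /Gamma1 /=.
have H1 := hgreen (A z1) w2 dBz dw2.
have H2 := congr1 (@conjc _) (hgreen (A w1) z2 dBw dz2).
rewrite !rmorphB !rmorphN /= !conjcK -!(hil_sym hX) -!(hil_sym hY) in H2.
rewrite !rmorphD !rmorphN /=.
apply/eqP; rewrite -subr_eq0; apply/eqP.
move: H1 H2.
set a1 := ipX (B (A z1)) w2; set a2 := ipY (A z1) (A w2).
set a3 := ipX z2 (B (A w1)); set a4 := ipY (A z2) (A w1).
set b1 := Pi1 (A z1) (Lam1 w2); set b2 := Lam2 w2 (Pi2 (A z1)).
set b3 := Pi1 (A w1) (Lam1 z2); set b4 := Lam2 z2 (Pi2 (A w1)).
move=> H1 H2.
have -> : a4 + a1 + (a2 + a3) - (- b1 + b4 + (- b3^*%C + b2^*%C))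
   = - ((- a1 - a2) - (b1 - b2^*%C)) - ((- a3 - a4) - (b3^*%C - b4)) by ring.
by rewrite H1 H2 !subrr; ring.
Qed.
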